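(* Let $\lambda>0$ and let $\xi_1,\xi_2,\ldots$ be i.i.d. exponential random variables with parameter $\lambda$. For $n\ge 2$ set $\theta^\star_n=\lambda^{-1}\log n$ and, for $k=1,\ldots,n$, $$D_{n,k}(\theta^\star_n)=\sum_{\ell=1,\ \ell\ne k}^n\mathbf{1}[\xi_k+\xi_\ell>\theta^\star_n].$$ Then for each $d=0,1,2,\ldots$, the sequence of random variables $\left\{\frac1n\sum_{k=1}^n\mathbf{1}[D_{n,k}(\theta^\star_n)=d],\ n=2,3,\ldots\right\}$ does not converge in probability to any constant.
   Context: $D_{n,k}(\theta)$ is the degree of node $k$ in the random threshold graph on nodes $\{1,\ldots,n\}$ in which distinct nodes $k,\ell$ are adjacent iff $\xi_k+\xi_\ell>\theta$, where $\xi_k$ is the fitness of node $k$. An exponential random variable with parameter $\lambda$ has $\mathbb{P}[\xi\le x]=1-e^{-\lambda\max(x,0)}$. *)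

(* Defs.v *)
From HB Require Import structures.
From mathcomp Require Import all_boot all_order all_algebra.
From mathcomp Require Import all_classical all_reals all_analysis.
Set Implicit Arguments. Unset Strict Implicit. Unset Printing Implicit Defensive.
Import Order.TTheory GRing.Theory Num.Theory Num.Def.
Local Open Scope classical_set_scope.
Local Open Scope ring_scope.

Definition mutually_independent {d : measure_display} {T : measurableType d}
  {R : realType} (P : probability T R) (X : nat -> T -> R) : Prop :=
  forall (s : seq nat) (B : nat -> set R),
    uniq s -> (forall i, measurable (B i)) ->
    P (\big[setI/setT]_(i <- s) (X i @^-1` B i)) =
    \big[*%E/1%E]_(i <- s) P (X i @^-1` B i).

Definition exponential_rv {d : measure_display} {T : measurableType d}
  {R : realType} (P : probability T R) (lam : R) (X : T -> R) : Prop :=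
  forall x : R, P [set t | X t <= x] = (1 - expR (- lam * maxr x 0))%:E.

Definition tdegree {T : Type} {R : realType} (X : nat -> T -> R) (n : nat)
  (th : R) (k : 'I_n) (t : T) : nat :=
  #|[set l : 'I_n | (l != k) && (th < X k t + X l t)]|.

Arguments tdegree {T R} X n th k t.

Definition frac_degree {T : Type} {R : realType} (X : nat -> T -> R)
  (n : nat) (th : R) (dg : nat) (t : T) : R :=
  (\sum_(k < n) ((tdegree X n th k t == dg) : nat)%:R) / n%:R.

Definition theta_star {R : realType} (lam : R) (n : nat) : R :=
  lam^-1 * ln n%:R.

Definition cvg_in_prob {d : measure_display} {T : measurableType d}
  {R : realType} (P : probability T R) (Y : nat -> T -> R) (c : R) : Prop :=
  forall eps : R, 0 < eps ->
    (fun n => P [set t | eps < `|Y n t - c|]) @ \oo --> (0%:E : \bar R).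

(* Main.v *)
Require Import Defs.
From HB Require Import structures.
From mathcomp Require Import all_boot all_order all_algebra.
From mathcomp Require Import all_classical all_reals all_analysis.
Import Order.TTheory GRing.Theory Num.Theory Num.Def.
Local Open Scope classical_set_scope.
Local Open Scope ring_scope.
From mathcomp Require Import ring lra zify.
Set Implicit Arguments. Unset Strict Implicit.

Lemma mbI d (T : measurableType d) (p q : T -> bool) :
  measurable [set t | p t] -> measurable [set t | q t] ->
  measurable [set t | p t && q t].
Proof.
move=> hp hq.
have -> : [set t | p t && q t] = [set t | p t] `&` [set t | q t].
  by apply/seteqP; split=> t /=; [move/andP|case=> -> ->].
exact: measurableI.
Qed.

Lemma mbN d (T : measurableType d) (p : T -> bool) :
  measurable [set t | p t] -> measurable [set t | ~~ p t].
Proof.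
move=> hp.
have -> : [set t | ~~ p t] = ~` [set t | p t].
  by apply/seteqP; split=> t /=; [move/negP|move/negP].
exact: measurableC.
Qed.

Lemma mbT d (T : measurableType d) (b : bool) :
  measurable [set t : T | b].
Proof.
case: b.
  have -> : [set t : T | true] = setT by apply/seteqP; split.
  exact: measurableT.
have -> : [set t : T | false] = set0 by apply/seteqP; split.
exact: measurable0.
Qed.

Lemma mball d (T : measurableType d) (J : Type) (p : J -> T -> bool) (s : seq J) :
  (forall j, measurable [set t | p j t]) ->
  measurable [set t | all (fun j => p j t) s].
Proof.
move=> hp; elim: s => [|j s IH] /=; first exact: mbT.
exact: mbI.
Qed.

Lemma mbforall d (T : measurableType d) (J : finType) (p : J -> T -> bool) :
  (forall j, measurable [set t | p j t]) ->
  measurable [set t | [forall j, p j t]].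
Proof.
move=> hp.
have -> : [set t | [forall j, p j t]] = [set t | all (fun j => p j t) (enum J)].
  apply/seteqP; split=> t /=.
    by move/forallP=> H; apply/allP=> j _.
  by move/allP=> H; apply/forallP=> j; apply: H; rewrite mem_enum.
exact: mball.
Qed.

Lemma mbexists d (T : measurableType d) (J : finType) (p : J -> T -> bool) :
  (forall j, measurable [set t | p j t]) ->
  measurable [set t | [exists j, p j t]].
Proof.
move=> hp.
have -> : [set t | [exists j, p j t]] = [set t | ~~ [forall j, ~~ p j t]].
  have E t : [exists j, p j t] = ~~ [forall j, ~~ p j t] by rewrite -negb_exists negbK.
  by apply/seteqP; split=> t /=; rewrite E.
apply: mbN; apply: mbforall => j; exact: mbN.
Qed.

Lemma mbeq d (T : measurableType d) (p q : T -> bool) :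
  measurable [set t | p t] -> measurable [set t | q t] ->
  measurable [set t | p t == q t].
Proof.
move=> hp hq.
have -> : [set t | p t == q t] = [set t | (p t && q t) || (~~ p t && ~~ q t)].
  by apply/seteqP; split=> t /=; case: (p t); case: (q t).
have -> : [set t | (p t && q t) || (~~ p t && ~~ q t)] =
   [set t | ~~ (~~ (p t && q t) && ~~ (~~ p t && ~~ q t))].
  by apply/seteqP; split=> t /=; case: (p t); case: (q t).
by apply/mbN/mbI; apply/mbN; apply/mbI => //; apply: mbN.
Qed.

Lemma mbfun d (T : measurableType d) (J : finType) (p : J -> T -> bool)
  (g : {ffun J -> bool} -> bool) (F : T -> bool) :
  (forall j, measurable [set t | p j t]) ->
  (forall t, F t = g [ffun j => p j t]) ->
  measurable [set t | F t].
Proof.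
move=> hp hF.
have -> : [set t | F t] =
  [set t | [exists v : {ffun J -> bool}, g v && [forall j, v j == p j t]]].
  apply/seteqP; split=> t /=.
    by rewrite hF => H; apply/existsP; exists [ffun j => p j t];
       rewrite H /=; apply/forallP=> j; rewrite ffunE.
  move/existsP=> [v /andP[gv /forallP H]]; rewrite hF.
  suff <- : v = [ffun j => p j t] by [].
  by apply/ffunP=> j; rewrite ffunE; apply/eqP.
apply: mbexists => v; apply: mbI; first exact: mbT.
by apply: mbforall=> j; apply: mbeq => //; exact: mbT.
Qed.

Lemma part_seq d (T : measurableType d) (R : realType) (P : probability T R)
  (V : finType) (W : T -> V) (E : set T) :
  measurable E -> (forall v, measurable [set t | W t == v]) ->
  forall s : seq V, uniq s ->
  P (E `&` [set t | W t \in s]) = (\sum_(v <- s) P (E `&` [set t | W t == v]))%E.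
Proof.
move=> mE mW; elim=> [|v s IH] /=.
  move=> _; rewrite big_nil.
  have -> : E `&` [set t | W t \in [::]] = set0.
    by apply/seteqP; split=> t //= [].
  exact: measure0.
move=> /andP[vs us]; rewrite big_cons -IH //.
have ms : measurable [set t | W t \in s].
  apply: (@mbfun _ _ V (fun v t => W t == v) (fun f => [exists v, f v && (v \in s)])) => // t.
  apply/idP/existsP => [ws|[u]]; first by exists (W t); rewrite ffunE eqxx.
  by rewrite ffunE => /andP[/eqP -> ].
rewrite -measureU //; first 1 last.
- exact: measurableI.
- exact: measurableI.
- apply/seteqP; split=> t //= [[_ /eqP wv] [_]]; rewrite wv => ws.
  by rewrite ws in vs.
congr (P _); apply/seteqP; split=> t /=.
  by case=> et; rewrite in_cons => /orP[h|h]; [left|right].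
by case=> -[et h]; split=> //; rewrite in_cons h ?orbT.
Qed.

Lemma part_pred d (T : measurableType d) (R : realType) (P : probability T R)
  (V : finType) (W : T -> V) (E : set T) (A : pred V) :
  measurable E -> (forall v, measurable [set t | W t == v]) ->
  P (E `&` [set t | A (W t)]) = (\sum_(v | A v) P (E `&` [set t | W t == v]))%E.
Proof.
move=> mE mW.
have -> : [set t | A (W t)] = [set t | W t \in enum A].
  by apply/seteqP; split=> t /=; rewrite mem_enum.
rewrite part_seq // ?enum_uniq //.
by rewrite big_enum_cond /=; apply: eq_bigl => v; rewrite andbT.
Qed.

Lemma mxle d (T : measurableType d) (R : realType) (X : T -> R) (a : R) :
  measurable_fun [set: T] X -> measurable [set t | X t <= a].
Proof.
move=> hX.
have := hX measurableT _ (measurable_itv `]-oo, a]).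
by rewrite setTI; congr measurable; apply/seteqP; split=> t /=; rewrite in_itv.
Qed.

Lemma mxlt d (T : measurableType d) (R : realType) (X : T -> R) (a : R) :
  measurable_fun [set: T] X -> measurable [set t | a < X t].
Proof.
move=> hX.
have := hX measurableT _ (measurable_itv `]a, +oo[).
by rewrite setTI; congr measurable; apply/seteqP; split=> t /=; rewrite in_itv /= andbT.
Qed.

Lemma mxsum d (T : measurableType d) (R : realType) (X Y : T -> R) (a : R) :
  measurable_fun [set: T] X -> measurable_fun [set: T] Y ->
  measurable [set t | a < X t + Y t].
Proof.
move=> hX hY; apply: (@mxlt _ _ _ (X \+ Y)); exact: measurable_realfun.measurable_funD.
Qed.

Lemma P_gt d (T : measurableType d) (R : realType) (P : probability T R)
  (lam : R) (X : T -> R) (a : R) :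
  measurable_fun [set: T] X -> exponential_rv P lam X ->
  P [set t | a < X t] = (expR (- lam * maxr a 0))%:E.
Proof.
move=> hX hE.
have -> : [set t | a < X t] = ~` [set t | X t <= a].
  by apply/seteqP; split=> t /=; [move=> h; apply/negP; rewrite -ltNge | move/negP; rewrite -ltNge].
rewrite probability_setC; last exact: mxle.
by rewrite hE -EFinB opprB addrC subrK.
Qed.

Lemma P_btw d (T : measurableType d) (R : realType) (P : probability T R)
  (lam : R) (X : T -> R) (a b : R) :
  measurable_fun [set: T] X -> exponential_rv P lam X -> a <= b ->
  P [set t | a < X t <= b] = (expR (- lam * maxr a 0) - expR (- lam * maxr b 0))%:E.
Proof.
move=> hX hE ab.
have -> : [set t | a < X t <= b] = [set t | X t <= b] `\` [set t | X t <= a].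
  apply/seteqP; split=> t /=.
    by move/andP=> [h1 h2]; split=> //; apply/negP; rewrite -ltNge.
  by move=> [h1 /negP h2]; rewrite h1 andbT ltNge.
rewrite measureD; [|exact: mxle|exact: mxle|]; last first.
  have h1 := probability_le1 P (mxle b hX).
  exact: (le_lt_trans h1 (ltry _)).
have -> : [set t | X t <= b] `&` [set t | X t <= a] = [set t | X t <= a].
  apply/seteqP; split=> t /=; first by case.
  by move=> h; split=> //; apply: le_trans ab.
have Ea := hE a; have Eb := hE b.
change (adde (P [set t | X t <= b]) (oppe (P [set t | X t <= a])) = (expR (- lam * maxr a 0) - expR (- lam * maxr b 0))%:E).
rewrite Ea Eb /=; congr EFin; ring.
Qed.

Lemma bigsetI_seq (T : Type) (I : eqType) (s : seq I) (F : I -> set T) :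
  \big[setI/setT]_(i <- s) F i = [set t | forall i, i \in s -> F i t].
Proof.
elim: s => [|i s IH]; first by rewrite big_nil; apply/seteqP; split=> t //=.
rewrite big_cons IH; apply/seteqP; split=> t /=.
  by move=> [h1 h2] j; rewrite in_cons => /orP[/eqP->|js] //; apply: h2.
move=> h; split; first by apply: h; rewrite in_cons eqxx.
by move=> j js; apply: h; rewrite in_cons js orbT.
Qed.

Lemma indep_all d (T : measurableType d) (R : realType) (P : probability T R)
  (xi : nat -> T -> R) (n : nat) (B : nat -> set R) :
  mutually_independent P xi -> (forall i, measurable (B i)) ->
  P [set t | forall i : 'I_n, B i (xi i t)] = (\prod_(i < n) P (xi i @^-1` B i))%E.
Proof.
move=> hI hB.
have E : [set t | forall i : 'I_n, B i (xi i t)] =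
    \big[setI/setT]_(i <- iota 0 n) (xi i @^-1` B i).
  rewrite bigsetI_seq; apply/seteqP; split=> t /=.
    by move=> h i; rewrite mem_iota add0n => lin; apply: (h (Ordinal lin)).
  by move=> h i; apply: h; rewrite mem_iota add0n ltn_ord.
rewrite E hI ?iota_uniq //.
by rewrite -(big_mkord xpredT (fun i => P (xi i @^-1` B i))) /index_iota subn0.
Qed.

Lemma indep_ord d (T : measurableType d) (R : realType) (P : probability T R)
  (xi : nat -> T -> R) (n : nat) (C : 'I_n -> set R) :
  mutually_independent P xi -> (forall i, measurable (C i)) ->
  P [set t | forall i : 'I_n, C i (xi i t)] = (\prod_(i < n) P (xi i @^-1` C i))%E.
Proof.
move=> hI hC.
pose B (i : nat) := if insub i is Some j then C j else setT.
have hB j : B (val j) = C j by rewrite /B valK.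
have -> : [set t | forall i : 'I_n, C i (xi i t)] = [set t | forall i : 'I_n, B i (xi i t)].
  by apply/seteqP; split=> t /= h i; [rewrite hB | rewrite -hB]; apply: h.
rewrite indep_all //; last first.
  by move=> i; rewrite /B; case: insub => [j|] //; exact: measurableT.
by apply: eq_bigr => i _; rewrite hB.
Qed.

Definition Pr d (T : measurableType d) (R : realType) (P : probability T R) (E : set T) : R :=
  fine (P E).

Lemma PrE d (T : measurableType d) (R : realType) (P : probability T R) (E : set T) :
  measurable E -> P E = (Pr P E)%:E.
Proof.
move=> mE; rewrite /Pr fineK //.
rewrite ge0_fin_numE ?measure_ge0 //.
exact: (le_lt_trans (probability_le1 P mE) (ltry 1)).
Qed.

Lemma Pr_ge0 d (T : measurableType d) (R : realType) (P : probability T R) (E : set T) :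
  measurable E -> 0 <= Pr P E.
Proof. by move=> mE; rewrite -lee_fin -PrE // measure_ge0. Qed.

Lemma Pr_le1 d (T : measurableType d) (R : realType) (P : probability T R) (E : set T) :
  measurable E -> Pr P E <= 1.
Proof. by move=> mE; rewrite -lee_fin -PrE // probability_le1. Qed.

Lemma PrT d (T : measurableType d) (R : realType) (P : probability T R) :
  Pr P setT = 1.
Proof. by rewrite /Pr probability_setT. Qed.

Lemma Pr_le d (T : measurableType d) (R : realType) (P : probability T R) (A B : set T) :
  measurable A -> measurable B -> A `<=` B -> Pr P A <= Pr P B.
Proof.
move=> mA mB AB; rewrite -lee_fin -!PrE //.
by apply: le_measure => //; rewrite inE.
Qed.

Lemma part_pred_r d (T : measurableType d) (R : realType) (P : probability T R)
  (V : finType) (W : T -> V) (E : set T) (A : pred V) :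
  measurable E -> (forall v, measurable [set t | W t == v]) ->
  Pr P (E `&` [set t | A (W t)]) = \sum_(v | A v) Pr P (E `&` [set t | W t == v]).
Proof.
move=> mE mW.
have := part_pred P A mE mW.
rewrite PrE; last first.
  apply: measurableI => //.
  apply: (@mbfun _ _ V (fun v t => W t == v) (fun f => [exists v, f v && A v])) => // t.
  apply/idP/existsP => [ws|[u]]; first by exists (W t); rewrite ffunE eqxx.
  by rewrite ffunE => /andP[/eqP -> ].
rewrite (eq_bigr (fun v => (Pr P (E `&` [set t | W t == v]))%:E)); last first.
  by move=> v _; rewrite PrE //; exact: measurableI.
by rewrite sumEFin => -[].
Qed.

Lemma expR_lnn (R : realType) (n : nat) : (0 < n)%N -> expR (ln (n%:R : R)) = n%:R.
Proof. by move=> n0; rewrite lnK // posrE ltr0n. Qed.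

Lemma th_top (R : realType) (lam : R) (n : nat) : 0 < lam -> (0 < n)%N ->
  expR (- lam * (theta_star lam n + 1)) = expR (- lam) / n%:R.
Proof.
move=> l0 n0; rewrite /theta_star.
have -> : - lam * (lam^-1 * ln (n%:R : R) + 1) = - ln (n%:R : R) + - lam.
  by field; rewrite gt_eqF.
by rewrite expRD expRN expR_lnn // mulrC.
Qed.

Lemma th_mid (R : realType) (lam : R) (n : nat) : 0 < lam -> (0 < n)%N ->
  expR (- lam * (theta_star lam n - 1)) = expR lam / n%:R.
Proof.
move=> l0 n0; rewrite /theta_star.
have -> : - lam * (lam^-1 * ln (n%:R : R) - 1) = - ln (n%:R : R) + lam.
  by field; rewrite gt_eqF.
by rewrite expRD expRN expR_lnn // mulrC.
Qed.

Lemma th_ge0 (R : realType) (lam : R) (n : nat) : 0 < lam -> (0 < n)%N ->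
  0 <= theta_star lam n.
Proof.
move=> l0 n0; rewrite /theta_star; apply: mulr_ge0; first by rewrite invr_ge0 ltW.
by apply: ln_ge0; rewrite ler1n.
Qed.

Lemma th_ge2 (R : realType) (lam : R) (n : nat) : 0 < lam ->
  expR (2 * lam) <= n%:R -> 2 <= theta_star lam n.
Proof.
move=> l0 hn.
have n0 : 0 < (n%:R : R) by apply: lt_le_trans hn; exact: expR_gt0.
have : ln (expR (2 * lam)) <= ln (n%:R : R).
  by rewrite ler_ln ?posrE ?expR_gt0.
rewrite expRK /theta_star => h.
by rewrite ler_pdivlMl // mulrC.
Qed.

Lemma expR_1B (R : realType) (x : R) : 0 <= x -> x <= 1/2 -> expR (- (2 * x)) <= 1 - x.
Proof.
move=> x0 x1.
have h := expR_ge1Dx (2 * x).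
rewrite expRN.
have p : 0 < 1 + 2 * x by lra.
apply: (@le_trans _ _ (1 + 2 * x)^-1).
  rewrite lef_pV2 ?posrE ?expR_gt0 //.
rewrite -[X in X <= _]mul1r ler_pdivrMr //; nra.
Qed.

Lemma pow_lb (R : realType) (a : R) (n k : nat) : 0 < a -> 2 * a <= n%:R -> (k <= n)%N ->
  expR (- (2 * a)) <= (1 - a / n%:R) ^+ k.
Proof.
move=> a0' an kn.
have a0 : 0 <= a by exact: ltW.
have n0 : 0 < (n%:R : R).
  case: n an kn => [|n] an kn; last by rewrite ltr0n.
  by move: an; rewrite mulr0n => h; lra.
have x0 : 0 <= a / n%:R by rewrite divr_ge0 // ltW.
have x1 : a / n%:R <= 1/2.
  by rewrite ler_pdivrMr //; lra.
have y1 : 1 - a / n%:R <= 1 by lra.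
apply: (@le_trans _ _ ((1 - a / n%:R) ^+ n)); last first.
  have -> : (1 - a / n%:R) ^+ n = (1 - a / n%:R) ^+ (n - k) * (1 - a / n%:R) ^+ k.
    by rewrite -exprD subnK.
  rewrite ler_piMl ?exprn_ge0 ?exprn_ile1 //; lra.
apply: (@le_trans _ _ (expR (- (2 * (a / n%:R))) ^+ n)); last first.
  apply: lerXn2r; rewrite ?nnegrE ?expR_ge0 //; first lra.
  exact: expR_1B.
rewrite -expRM_natr; rewrite le_eqVlt; apply/orP; left; apply/eqP; congr expR.
by field; rewrite (gt_eqF n0).
Qed.

Lemma ffact_lb (N m : nat) : ((N - m) ^ m <= N ^_ m)%N.
Proof.
elim: m N => [|m IH] [|N] //=.
  by rewrite sub0n exp0n.
rewrite ffactSS subSS expnS leq_mul //.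
  by apply: (leq_trans (leq_subr _ _)).
Qed.

Lemma binom_lb (R : realType) (lam : R) (n N m : nat) : 0 < lam ->
  (2 * m + 2 <= n)%N -> (n <= N.+1)%N -> (N <= n)%N ->
  2 * expR lam <= n%:R ->
  (expR (- lam) / 2) ^+ m / (m`!)%:R * expR (- (2 * expR lam)) <=
  ('C(N, m))%:R * (expR (- lam) / n%:R) ^+ m * (1 - expR lam / n%:R) ^+ (N - m).
Proof.
move=> l0 hm hN hNn hn.
have n0 : (0 < n)%N by apply: leq_trans hm; rewrite addn2.
have n0r : 0 < (n%:R : R) by rewrite ltr0n.
have f0 : 0 < ((m`!)%:R : R) by rewrite ltr0n fact_gt0.
have h2 : (n <= 2 * (N - m))%N by lia.
have hC : ((n%:R / 2) ^+ m : R) <= ('C(N, m))%:R * (m`!)%:R.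
  rewrite -natrM bin_ffact.
  apply: (@le_trans _ _ (((N - m) ^ m)%N%:R)); last by rewrite ler_nat ffact_lb.
  rewrite natrX; apply: lerXn2r; rewrite ?nnegrE ?divr_ge0 ?ler0n //.
  by rewrite ler_pdivrMr // mulrC -natrM ler_nat.
have hP := @pow_lb R (expR lam) n (N - m) (expR_gt0 lam) hn (leq_trans (leq_subr _ _) hNn).
apply: ler_pM; first by rewrite divr_ge0 // exprn_ge0 // divr_ge0 // expR_ge0.
- exact: expR_ge0.
- rewrite ler_pdivrMr //.
  have -> : (expR (- lam) / 2) ^+ m = (expR (- lam) / n%:R) ^+ m * (n%:R / 2) ^+ m.
    by rewrite -exprMn; congr (_ ^+ _); field; rewrite (gt_eqF n0r).
  have -> : ('C(N, m))%:R * (expR (- lam) / n%:R) ^+ m * (m`!)%:R =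
     (expR (- lam) / n%:R) ^+ m * (('C(N, m))%:R * (m`!)%:R) by ring.
  by rewrite ler_wpM2l // exprn_ge0 // divr_ge0 // expR_ge0.
- exact: hP.
Qed.

Definition Wtop (T : Type) (R : realType) (xi : nat -> T -> R) (n : nat) (th : R) (t : T)
  : {set 'I_n} := [set i : 'I_n | th + 1 < xi i t].

Definition Eall (T : Type) (R : realType) (xi : nat -> T -> R) (n : nat) (th : R) (t : T)
  : bool := [forall i : 'I_n, (-1 < xi i t) && ((xi i t <= th - 1) || (th + 1 < xi i t))].

Lemma tdegreeE (T : Type) (R : realType) (xi : nat -> T -> R) (n : nat) (th : R) (k : 'I_n) (t : T) :
  tdegree xi n th k t = #|[set l : 'I_n | (l != k) && (th < xi k t + xi l t)]%SET|.
Proof.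
rewrite /tdegree; apply: eq_card => l; rewrite inE.
by rewrite [LHS]unfold_in /in_set /mkset asboolb.
Qed.

Lemma deg_low (T : Type) (R : realType) (xi : nat -> T -> R) (n : nat) (th : R) (t : T)
  (k : 'I_n) : 2 <= th -> Eall xi n th t -> -1 < xi k t <= 1 ->
  tdegree xi n th k t = #|Wtop xi n th t|.
Proof.
move=> th2 /forallP hE /andP[k1 k2].
rewrite tdegreeE /Wtop; apply: eq_card => l; rewrite !inE.
have := hE l => /andP[l1 /orP[l2|l2]].
  have -> : th + 1 < xi l t = false by apply/negbTE; rewrite -leNgt; lra.
  have -> : th < xi k t + xi l t = false by apply/negbTE; rewrite -leNgt; lra.
  by rewrite andbF.
rewrite l2; have -> : th < xi k t + xi l t by lra.
rewrite andbT; apply/eqP => lk; move: l2; rewrite lk; lra.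
Qed.

Lemma deg_big (T : Type) (R : realType) (xi : nat -> T -> R) (n : nat) (th : R) (t : T)
  (k : 'I_n) (m : nat) : 0 <= th -> Eall xi n th t -> #|Wtop xi n th t| = m.+1 ->
  (m <= tdegree xi n th k t)%N.
Proof.
move=> th0 /forallP hE hW.
have := cardsD1 k (Wtop xi n th t); rewrite hW => hc.
rewrite tdegreeE; apply: (@leq_trans #|Wtop xi n th t :\ k|).
  move: hc; case: (k \in Wtop xi n th t) => /=; first by rewrite add1n => -[->].
  by rewrite add0n => <-.
apply: subset_leq_card; apply/fintype.subsetP => l; rewrite !inE => /andP[lk].
rewrite lk /= => hl; have := hE k => /andP[k1 _]; lra.
Qed.

Definition topS (R : realType) (th : R) : set R := [set x | th + 1 < x].
Definition midS (R : realType) (th : R) : set R := [set x | -1 < x <= th - 1].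
Definition lowS (R : realType) : set R := [set x : R | -1 < x <= 1].

Lemma m_topS (R : realType) (th : R) : measurable (topS th).
Proof.
have -> : topS th = [set` `]th + 1, +oo[] by apply/seteqP; split=> x /=; rewrite in_itv /= andbT.
exact: measurable_itv.
Qed.

Lemma m_midS (R : realType) (th : R) : measurable (midS th).
Proof.
have -> : midS th = [set` `]-1, th - 1]] by apply/seteqP; split=> x /=; rewrite in_itv.
exact: measurable_itv.
Qed.

Lemma m_lowS (R : realType) : measurable (@lowS R).
Proof.
have -> : @lowS R = [set` `]-1, 1]] by apply/seteqP; split=> x /=; rewrite in_itv.
exact: measurable_itv.
Qed.

Lemma Pr_top d (T : measurableType d) (R : realType) (P : probability T R)
  (lam : R) (X : T -> R) (n : nat) :
  0 < lam -> (0 < n)%N -> measurable_fun [set: T] X -> exponential_rv P lam X ->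
  Pr P (X @^-1` topS (theta_star lam n)) = expR (- lam) / n%:R.
Proof.
move=> l0 n0 hX hE; rewrite /Pr.
have := P_gt (theta_star lam n + 1) hX hE.
rewrite /preimage /topS => ->; rewrite /=.
have th0 := th_ge0 l0 n0.
rewrite max_l; last by lra.
exact: th_top.
Qed.

Lemma Pr_mid d (T : measurableType d) (R : realType) (P : probability T R)
  (lam : R) (X : T -> R) (n : nat) :
  0 < lam -> expR (2 * lam) <= n%:R -> measurable_fun [set: T] X -> exponential_rv P lam X ->
  Pr P (X @^-1` midS (theta_star lam n)) = 1 - expR lam / n%:R.
Proof.
move=> l0 hn hX hE; rewrite /Pr.
have th2 := th_ge2 l0 hn.
have n0 : (0 < n)%N.
  by rewrite -(ltr0n R); apply: lt_le_trans hn; exact: expR_gt0.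
have := P_btw hX hE (_ : -1 <= theta_star lam n - 1).
rewrite /preimage /midS => ->; last by lra.
rewrite /= max_r; last by lra.
rewrite max_l; last by lra.
by rewrite mulr0 expR0 th_mid.
Qed.

Lemma Pr_low d (T : measurableType d) (R : realType) (P : probability T R)
  (lam : R) (X : T -> R) :
  measurable_fun [set: T] X -> exponential_rv P lam X ->
  Pr P (X @^-1` (@lowS R)) = 1 - expR (- lam).
Proof.
move=> hX hE; rewrite /Pr.
have := P_btw hX hE (_ : -1 <= 1).
rewrite /preimage /lowS => ->; last by lra.
rewrite /= max_r; last by lra.
rewrite max_l; last by lra.
by rewrite mulr0 expR0 mulr1.
Qed.

Lemma prod_if (R : realType) (n : nat) (S : {set 'I_n}) (a b : R) :
  \prod_(i < n) (if i \in S then a else b) = a ^+ #|S| * b ^+ (n - #|S|).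
Proof.
rewrite (bigID (mem S)) /=.
rewrite (eq_bigr (fun _ => a)); last by move=> i ->.
rewrite [X in _ * X](eq_bigr (fun _ => b)); last by move=> i /negbTE ->.
rewrite prodr_const.
have -> : \prod_(i < n | i \notin S) b = b ^+ #|[set i | i \notin S]|%SET.
  by rewrite -prodr_const; apply: eq_bigl => i; rewrite inE.
congr (_ * b ^+ _).
have hc := cardsC S; rewrite card_ord in hc.
have -> : (n - #|S|)%N = #|~: S| by lia.
by apply: eq_card => i; rewrite !inE.
Qed.

Lemma natfact (a b n : nat) : (1 + a + b = n)%N -> b = (n.-1 - a)%N.
Proof. by move=> <-; rewrite -addnA add1n /= addKn. Qed.

Lemma prod_if3 (R : realType) (n : nat) (S : {set 'I_n}) (k : 'I_n) (a b c : R) :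
  k \notin S ->
  \prod_(i < n) (if i \in S then a else if i == k then c else b) =
  a ^+ #|S| * c * b ^+ (n.-1 - #|S|).
Proof.
move=> kS.
rewrite (bigD1 k) //= (negbTE kS) eqxx.
rewrite (eq_bigr (fun i => if i \in S then a else b)); last first.
  by move=> i /negbTE ->.
rewrite (bigID (mem S)) /=.
rewrite (eq_bigr (fun _ => a)); last by move=> i /andP[_ ->].
rewrite [X in _ * (_ * X)](eq_bigr (fun _ => b)); last by move=> i /andP[_ /negbTE ->].
have -> : \prod_(i < n | (i != k) && (i \in S)) a = a ^+ #|S|.
  rewrite -prodr_const; apply: eq_bigl => i; rewrite andb_idl // => iS.
  by apply/eqP => ik; move: kS; rewrite -ik iS.
have -> : \prod_(i < n | (i != k) && (i \notin S)) b = b ^+ #|[set i | i \notin k |: S]|%SET.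
  by rewrite -prodr_const; apply: eq_bigl => i; rewrite !inE negb_or.
have hc := cardsC (k |: S); rewrite card_ord cardsU1 kS /= in hc.
have -> : #|[set i | i \notin k |: S]|%SET = (n.-1 - #|S|)%N.
  have -> : #|[set i | i \notin k |: S]|%SET = #|~: (k |: S)|.
    by apply: eq_card => i; rewrite !inE.
  exact: (natfact hc).
by ring.
Qed.

Lemma m_pre d (T : measurableType d) (R : realType) (X : T -> R) (B : set R) :
  measurable_fun [set: T] X -> measurable B -> measurable (X @^-1` B).
Proof. by move=> hX hB; rewrite -[X @^-1` B]setTI; exact: hX. Qed.

Definition GS (T : Type) (R : realType) (xi : nat -> T -> R) (n : nat) (th : R)
  (S : {set 'I_n}) : set T :=
  [set t | forall i : 'I_n, (if i \in S then topS th else midS th) (xi i t)].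

Definition GSk (T : Type) (R : realType) (xi : nat -> T -> R) (n : nat) (th : R)
  (S : {set 'I_n}) (k : 'I_n) : set T :=
  [set t | forall i : 'I_n,
     (if i \in S then topS th else if i == k then @lowS R else midS th) (xi i t)].

Lemma Pr_GS d (T : measurableType d) (R : realType) (P : probability T R)
  (lam : R) (xi : nat -> T -> R) (n : nat) (S : {set 'I_n}) :
  0 < lam -> (forall i, measurable_fun [set: T] (xi i)) ->
  mutually_independent P xi -> (forall i, exponential_rv P lam (xi i)) ->
  expR (2 * lam) <= n%:R ->
  Pr P (GS xi (theta_star lam n) S) =
  (expR (- lam) / n%:R) ^+ #|S| * (1 - expR lam / n%:R) ^+ (n - #|S|).
Proof.
move=> hl hm hI hE hn.
have n0 : (0 < n)%N.
  by rewrite -(ltr0n R); apply: lt_le_trans hn; exact: expR_gt0.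
rewrite /Pr /GS (indep_ord (C := fun i : 'I_n => if i \in S then topS (theta_star lam n)
    else midS (theta_star lam n))) //; last first.
  by move=> i; case: (i \in S); [exact: m_topS | exact: m_midS].
rewrite (eq_bigr (fun i : 'I_n => (if i \in S then expR (- lam) / n%:R
   else 1 - expR lam / n%:R)%:E)); last first.
  move=> i _; case: (i \in S).
    by rewrite PrE ?Pr_top //; apply: m_pre => //; exact: m_topS.
  by rewrite PrE ?Pr_mid //; apply: m_pre => //; exact: m_midS.
by rewrite prodEFin /= prod_if.
Qed.

Lemma Pr_GSk d (T : measurableType d) (R : realType) (P : probability T R)
  (lam : R) (xi : nat -> T -> R) (n : nat) (S : {set 'I_n}) (k : 'I_n) :
  0 < lam -> (forall i, measurable_fun [set: T] (xi i)) ->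
  mutually_independent P xi -> (forall i, exponential_rv P lam (xi i)) ->
  expR (2 * lam) <= n%:R -> k \notin S ->
  Pr P (GSk xi (theta_star lam n) S k) =
  (expR (- lam) / n%:R) ^+ #|S| * (1 - expR (- lam)) *
     (1 - expR lam / n%:R) ^+ (n.-1 - #|S|).
Proof.
move=> hl hm hI hE hn kS.
have n0 : (0 < n)%N.
  by rewrite -(ltr0n R); apply: lt_le_trans hn; exact: expR_gt0.
rewrite /Pr /GSk (indep_ord (C := fun i : 'I_n => if i \in S then topS (theta_star lam n)
    else if i == k then @lowS R else midS (theta_star lam n))) //; last first.
  move=> i; case: (i \in S); first exact: m_topS.
  by case: (i == k); [exact: m_lowS | exact: m_midS].
rewrite (eq_bigr (fun i : 'I_n => (if i \in S then expR (- lam) / n%:R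
   else if i == k then 1 - expR (- lam) else 1 - expR lam / n%:R)%:E)); last first.
  move=> i _; case: (i \in S).
    by rewrite PrE ?Pr_top //; apply: m_pre => //; exact: m_topS.
  case: (i == k).
    by rewrite PrE ?(Pr_low (hm i) (hE i)) //; apply: m_pre => //; exact: m_lowS.
  by rewrite PrE ?Pr_mid //; apply: m_pre => //; exact: m_midS.
by rewrite prodEFin /= prod_if3.
Qed.

Lemma mbO d (T : measurableType d) (p q : T -> bool) :
  measurable [set t | p t] -> measurable [set t | q t] ->
  measurable [set t | p t || q t].
Proof.
move=> hp hq.
have -> : [set t | p t || q t] = [set t | ~~ (~~ p t && ~~ q t)].
  by apply/seteqP; split=> t /=; case: (p t); case: (q t).
by apply/mbN/mbI; apply: mbN.
Qed.

Lemma m_Eall d (T : measurableType d) (R : realType) (xi : nat -> T -> R) (n : nat) (th : R) :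
  (forall i, measurable_fun [set: T] (xi i)) -> measurable [set t | Eall xi n th t].
Proof.
move=> hm; rewrite /Eall; apply: mbforall => i.
apply: mbI; first exact: mxlt.
by apply: mbO; [exact: mxle | exact: mxlt].
Qed.

Lemma m_Wtop d (T : measurableType d) (R : realType) (xi : nat -> T -> R) (n : nat) (th : R)
  (S : {set 'I_n}) :
  (forall i, measurable_fun [set: T] (xi i)) -> measurable [set t | Wtop xi n th t == S].
Proof.
move=> hm.
have -> : [set t | Wtop xi n th t == S] =
    [set t | [forall i : 'I_n, (th + 1 < xi i t) == (i \in S)]].
  apply/seteqP; split=> t /=.
    by move/eqP=> <-; apply/forallP => i; rewrite /Wtop inE.
  move/forallP=> h; apply/eqP/setP => i; rewrite /Wtop inE.
  exact/eqP/h.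
apply: mbforall => i; apply: mbeq; [exact: mxlt | exact: mbT].
Qed.

Lemma Eall_GS (T : Type) (R : realType) (xi : nat -> T -> R) (n : nat) (th : R)
  (S : {set 'I_n}) : 0 <= th ->
  [set t | Eall xi n th t] `&` [set t | Wtop xi n th t == S] = GS xi th S.
Proof.
move=> th0; apply/seteqP; split=> t /=.
  move=> [/forallP hA /eqP hW] i; rewrite -hW /Wtop inE.
  have := hA i; case: ifP => //= h /andP[h1 /orP[h2|h3]].
    by rewrite /midS /= h1 h2.
  by rewrite h3 in h.
move=> h; split.
  apply/forallP => i; have := h i; case: (i \in S); rewrite /topS /midS /=.
    by move=> hi; rewrite hi orbT andbT; lra.
  by move/andP=> [-> ->].
apply/eqP/setP => i; rewrite /Wtop inE; have := h i.
case: (i \in S); rewrite /topS /midS /= => // /andP[_ hi].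
by apply/negbTE; rewrite -leNgt; lra.
Qed.

Lemma Eall_GSk (T : Type) (R : realType) (xi : nat -> T -> R) (n : nat) (th : R)
  (S : {set 'I_n}) (k : 'I_n) : 2 <= th -> k \notin S ->
  ([set t | Eall xi n th t] `&` (xi k @^-1` @lowS R)) `&` [set t | Wtop xi n th t == S] =
  GSk xi th S k.
Proof.
move=> th2 kS; apply/seteqP; split=> t /=.
  move=> [[/forallP hA hk] /eqP hW] i; rewrite -hW /Wtop inE.
  have := hA i; case: ifP => //= h /andP[h1 /orP[h2|h3]]; last by rewrite h3 in h.
  case: eqP => [->|_]; first exact: hk.
  by rewrite /midS /= h1 h2.
move=> h; split; first split.
- apply/forallP => i; have := h i; case: (i \in S); rewrite /topS /midS /lowS /=.
    by move=> hi; rewrite hi orbT andbT; lra.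
  case: (i == k) => /=; last by move/andP=> [-> ->].
  by move/andP=> [-> hi]; rewrite /=; apply/orP; left; lra.
- by have := h k; rewrite (negbTE kS) eqxx.
apply/eqP/setP => i; rewrite /Wtop inE; have := h i.
case: (i \in S); rewrite /topS /midS /lowS /= => //.
by case: (i == k) => /andP[_ hi]; apply/negbTE; rewrite -leNgt; lra.
Qed.

Lemma PF d (T : measurableType d) (R : realType) (P : probability T R)
  (lam : R) (xi : nat -> T -> R) (n m : nat) :
  0 < lam -> (forall i, measurable_fun [set: T] (xi i)) ->
  mutually_independent P xi -> (forall i, exponential_rv P lam (xi i)) ->
  expR (2 * lam) <= n%:R ->
  Pr P ([set t | Eall xi n (theta_star lam n) t] `&`
        [set t | #|Wtop xi n (theta_star lam n) t| == m]) =
  ('C(n, m))%:R * (expR (- lam) / n%:R) ^+ m * (1 - expR lam / n%:R) ^+ (n - m).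
Proof.
move=> hl hm hI hE hn.
have th2 := th_ge2 hl hn.
have := @part_pred_r _ _ _ P _ (Wtop xi n (theta_star lam n))
   [set t | Eall xi n (theta_star lam n) t] (fun S => #|S| == m) (m_Eall _ _ hm)
   (fun S => m_Wtop _ S hm).
move=> ->.
rewrite (eq_bigr (fun _ => (expR (- lam) / n%:R) ^+ m * (1 - expR lam / n%:R) ^+ (n - m)));
  last first.
  move=> S /eqP hS; rewrite Eall_GS; last by lra.
  by rewrite Pr_GS // hS.
rewrite sumr_const.
have -> : #|[pred S : {set 'I_n} | #|S| == m]| = 'C(n, m).
  have := card_draws 'I_n m; rewrite card_ord => <-.
  by apply: eq_card => S; rewrite !inE.
by rewrite -mulr_natr; ring.
Qed.

Lemma PFk d (T : measurableType d) (R : realType) (P : probability T R)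
  (lam : R) (xi : nat -> T -> R) (n m : nat) (k : 'I_n) :
  0 < lam -> (forall i, measurable_fun [set: T] (xi i)) ->
  mutually_independent P xi -> (forall i, exponential_rv P lam (xi i)) ->
  expR (2 * lam) <= n%:R ->
  Pr P (([set t | Eall xi n (theta_star lam n) t] `&` (xi k @^-1` @lowS R)) `&`
        [set t | (#|Wtop xi n (theta_star lam n) t| == m) &&
                 (k \notin Wtop xi n (theta_star lam n) t)]) =
  ('C(n.-1, m))%:R * (expR (- lam) / n%:R) ^+ m * (1 - expR (- lam)) *
     (1 - expR lam / n%:R) ^+ (n.-1 - m).
Proof.
move=> hl hm hI hE hn.
have th2 := th_ge2 hl hn.
have mE : measurable ([set t | Eall xi n (theta_star lam n) t] `&` (xi k @^-1` @lowS R)).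
  by apply: measurableI; [exact: m_Eall | apply: m_pre => //; exact: m_lowS].
have := @part_pred_r _ _ _ P _ (Wtop xi n (theta_star lam n))
   _ (fun S => (#|S| == m) && (k \notin S)) mE
   (fun S => m_Wtop _ S hm).
move=> ->.
rewrite (eq_bigr (fun _ => (expR (- lam) / n%:R) ^+ m * (1 - expR (- lam)) *
     (1 - expR lam / n%:R) ^+ (n.-1 - m)));
  last first.
  move=> S /andP[/eqP hS kS]; rewrite Eall_GSk //.
  by rewrite Pr_GSk // hS.
rewrite sumr_const.
have -> : #|[pred S : {set 'I_n} | (#|S| == m) && (k \notin S)]| = 'C(n.-1, m).
  have <- : #|[set~ k]%SET| = n.-1 by rewrite cardsC1 card_ord.
  rewrite -cards_draws; apply: eq_card => S; rewrite !inE andbC; congr (_ && _).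
  apply/idP/idP.
    move=> kS; apply/fintype.subsetP => i iS; rewrite !inE.
    by apply/eqP => ik; move: kS; rewrite -ik iS.
  by move/fintype.subsetP => /(_ k); rewrite !inE eqxx; case: (k \in S) => // /(_ isT).
by rewrite -mulr_natr; ring.
Qed.

Lemma m_deg d (T : measurableType d) (R : realType) (xi : nat -> T -> R) (n : nat) (th : R)
  (k : 'I_n) (dg : nat) :
  (forall i, measurable_fun [set: T] (xi i)) ->
  measurable [set t | tdegree xi n th k t == dg].
Proof.
move=> hm.
apply: (@mbfun _ _ 'I_n (fun l t => (l != k) && (th < xi k t + xi l t))
   (fun u => #|[set l | u l]%SET| == dg)).
  by move=> l; apply: mbI; [exact: mbT | exact: mxsum].
move=> t; rewrite tdegreeE; congr (_ == _); apply: eq_card => l; rewrite !inE ffunE.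
by [].
Qed.

Definition Dv (T : Type) (R : realType) (xi : nat -> T -> R) (n : nat) (th : R) (dg : nat)
  (t : T) : {ffun 'I_n -> bool} := [ffun k => tdegree xi n th k t == dg].

Lemma m_Dv d (T : measurableType d) (R : realType) (xi : nat -> T -> R) (n : nat) (th : R)
  (dg : nat) (v : {ffun 'I_n -> bool}) :
  (forall i, measurable_fun [set: T] (xi i)) ->
  measurable [set t | Dv xi n th dg t == v].
Proof.
move=> hm.
have -> : [set t | Dv xi n th dg t == v] =
    [set t | [forall k : 'I_n, (tdegree xi n th k t == dg) == v k]].
  apply/seteqP; split=> t /=.
    by move/eqP=> <-; apply/forallP => k; rewrite /Dv ffunE.
  move/forallP=> h; apply/eqP/ffunP => k; rewrite /Dv ffunE.
  exact: (eqP (h k)).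
apply: mbforall => k; apply: mbeq; [exact: m_deg | exact: mbT].
Qed.

Definition cnt (R : realType) (n : nat) (v : {ffun 'I_n -> bool}) : R :=
  \sum_(k < n) ((v k : nat)%:R).

Lemma cnt_le (R : realType) (n : nat) (v : {ffun 'I_n -> bool}) : cnt R v <= n%:R.
Proof.
rewrite /cnt; apply: (@le_trans _ _ (\sum_(k < n) (1 : R))).
  by apply: ler_sum => k _; case: (v k).
by rewrite sumr_const card_ord.
Qed.

Lemma cnt_ge0 (R : realType) (n : nat) (v : {ffun 'I_n -> bool}) : 0 <= cnt R v.
Proof. by rewrite /cnt sumr_ge0. Qed.

Lemma fracE (T : Type) (R : realType) (xi : nat -> T -> R) (n : nat) (th : R) (dg : nat)
  (t : T) : frac_degree xi n th dg t = cnt R (Dv xi n th dg t) / n%:R.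
Proof.
by rewrite /frac_degree /cnt; congr (_ / _); apply: eq_bigr => k _; rewrite /Dv ffunE.
Qed.

Lemma m_frac d (T : measurableType d) (R : realType) (xi : nat -> T -> R) (n : nat) (th : R)
  (dg : nat) (g : R -> bool) :
  (forall i, measurable_fun [set: T] (xi i)) ->
  measurable [set t | g (frac_degree xi n th dg t)].
Proof.
move=> hm.
apply: (@mbfun _ _ 'I_n (fun k t => tdegree xi n th k t == dg)
   (fun u => g (cnt R u / n%:R))).
  by move=> k; exact: m_deg.
by move=> t; rewrite fracE.
Qed.

Lemma claim d (T : measurableType d) (R : realType) (P : probability T R)
  (xi : nat -> T -> R) (n : nat) (th : R) (dg : nat) (eps : R) :
  (forall i, measurable_fun [set: T] (xi i)) -> (0 < n)%N -> 0 < eps ->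
  \sum_(k < n) Pr P [set t | tdegree xi n th k t == dg] <=
  n%:R * (eps + Pr P [set t | eps < frac_degree xi n th dg t]).
Proof.
move=> hm n0 e0.
pose q (v : {ffun 'I_n -> bool}) := Pr P (setT `&` [set t | Dv xi n th dg t == v]).
have q0 v : 0 <= q v by apply: Pr_ge0; apply: measurableI => //; exact: m_Dv.
have hk k : Pr P [set t | tdegree xi n th k t == dg] = \sum_(v : {ffun 'I_n -> bool} | v k) q v.
  have := @part_pred_r _ _ _ P _ (Dv xi n th dg) setT (fun v : {ffun 'I_n -> bool} => v k) measurableT
    (fun v => @m_Dv _ _ _ xi n th dg v hm).
  have -> : setT `&` [set t | (Dv xi n th dg t) k] = [set t | tdegree xi n th k t == dg].
    by apply/seteqP; split=> t /=; rewrite /Dv ffunE; [case | split].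
  by [].
have h1 : \sum_(v : {ffun 'I_n -> bool}) q v = 1.
  have := @part_pred_r _ _ _ P _ (Dv xi n th dg) setT xpredT measurableT
    (fun v => @m_Dv _ _ _ xi n th dg v hm).
  have -> : setT `&` [set t | xpredT (Dv xi n th dg t)] = setT.
    by apply/seteqP; split=> t //=.
  by rewrite PrT.
have n0r : 0 < (n%:R : R) by rewrite ltr0n.
have h2 : \sum_(v : {ffun 'I_n -> bool} | eps < cnt R v / n%:R) q v = Pr P [set t | eps < frac_degree xi n th dg t].
  have := @part_pred_r _ _ _ P _ (Dv xi n th dg) setT (fun v : {ffun 'I_n -> bool} => eps < cnt R v / n%:R)
    measurableT (fun v => @m_Dv _ _ _ xi n th dg v hm).
  have -> : setT `&` [set t | eps < cnt R (Dv xi n th dg t) / n%:R] =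
     [set t | eps < frac_degree xi n th dg t].
    by apply/seteqP; split=> t /=; rewrite fracE; [case | split].
  by move=> ->.
under eq_bigr do rewrite hk.
have -> : \sum_(k < n) \sum_(v : {ffun 'I_n -> bool} | v k) q v = \sum_(v : {ffun 'I_n -> bool}) cnt R v * q v.
  rewrite (eq_bigr (fun k : 'I_n => \sum_(v : {ffun 'I_n -> bool}) ((v k : nat)%:R * q v))); last first.
    move=> k _; rewrite big_mkcond /=; apply: eq_bigr => v _.
    by case: (v k); rewrite ?mul1r ?mul0r.
  rewrite exchange_big /=; apply: eq_bigr => v _.
  by rewrite /cnt mulr_suml.
apply: (@le_trans _ _ (\sum_(v : {ffun 'I_n -> bool})
   (n%:R * eps * q v + n%:R * (if eps < cnt R v / n%:R then q v else 0)))).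
  apply: ler_sum => v _.
  case: ifP => hv.
    rewrite -[X in X <= _]add0r; apply: lerD.
      by apply: mulr_ge0 => //; apply: mulr_ge0 => //; exact: ltW.
    by apply: ler_wpM2r => //; exact: cnt_le.
  rewrite mulr0 addr0; apply: ler_wpM2r => //.
  move/negbT: hv; rewrite -leNgt ler_pdivrMr // => hv.
  by rewrite mulrC.
rewrite big_split /= -mulr_sumr -mulr_sumr -big_mkcond /= h1 h2.
by rewrite mulr1 mulrDr.
Qed.

Definition kappa (R : realType) (lam : R) (m : nat) : R :=
  (expR (- lam) / 2) ^+ m / (m`!)%:R * expR (- (2 * expR lam)).

Lemma kappa_gt0 (R : realType) (lam : R) (m : nat) : 0 < kappa lam m.
Proof.
rewrite /kappa; apply: mulr_gt0; last exact: expR_gt0.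
apply: divr_gt0; last by rewrite ltr0n fact_gt0.
by apply: exprn_gt0; apply: divr_gt0 => //; exact: expR_gt0.
Qed.

Definition goodn (R : realType) (lam : R) (dg n : nat) : Prop :=
  [/\ (2 * dg.+2 + 2 <= n)%N, expR (2 * lam) <= n%:R & 2 * expR lam <= n%:R].

Lemma F2_frac (T : Type) (R : realType) (xi : nat -> T -> R) (n : nat) (th : R) (dg : nat)
  (t : T) : 0 <= th -> Eall xi n th t -> #|Wtop xi n th t| == dg.+2 ->
  frac_degree xi n th dg t = 0.
Proof.
move=> th0 hA /eqP hW; rewrite /frac_degree big1 ?mul0r // => k _.
have := deg_big k th0 hA hW.
by case: eqP => // ->; rewrite ltnn.
Qed.

Lemma lbA d (T : measurableType d) (R : realType) (P : probability T R)
  (lam : R) (xi : nat -> T -> R) (n dg : nat) :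
  0 < lam -> (forall i, measurable_fun [set: T] (xi i)) ->
  mutually_independent P xi -> (forall i, exponential_rv P lam (xi i)) ->
  goodn lam dg n ->
  kappa lam dg.+2 <= Pr P ([set t | Eall xi n (theta_star lam n) t] `&`
        [set t | #|Wtop xi n (theta_star lam n) t| == dg.+2]).
Proof.
move=> hl hm hI hE [h1 h2 h3].
rewrite PF //; apply: binom_lb => //.
Qed.

Lemma lbB d (T : measurableType d) (R : realType) (P : probability T R)
  (lam : R) (xi : nat -> T -> R) (n dg : nat) (k : 'I_n) :
  0 < lam -> (forall i, measurable_fun [set: T] (xi i)) ->
  mutually_independent P xi -> (forall i, exponential_rv P lam (xi i)) ->
  goodn lam dg n ->
  kappa lam dg * (1 - expR (- lam)) <=
  Pr P [set t | tdegree xi n (theta_star lam n) k t == dg].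
Proof.
move=> hl hm hI hE [h1 h2 h3].
have th2 := th_ge2 hl h2.
have n0 : (0 < n)%N by apply: leq_trans h1.
apply: (@le_trans _ _ (Pr P (([set t | Eall xi n (theta_star lam n) t] `&`
     (xi k @^-1` @lowS R)) `&`
     [set t | (#|Wtop xi n (theta_star lam n) t| == dg) &&
                 (k \notin Wtop xi n (theta_star lam n) t)]))).
  rewrite PFk //.
  have e1 : 0 <= 1 - expR (- lam).
    by rewrite subr_ge0 -expR0 ler_expR oppr_le0 ltW.
  have -> : ('C(n.-1, dg))%:R * (expR (- lam) / n%:R) ^+ dg * (1 - expR (- lam)) *
     (1 - expR lam / n%:R) ^+ (n.-1 - dg) =
     (('C(n.-1, dg))%:R * (expR (- lam) / n%:R) ^+ dg *
     (1 - expR lam / n%:R) ^+ (n.-1 - dg)) * (1 - expR (- lam)) by ring.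
  apply: ler_wpM2r => //; apply: binom_lb => //.
  - by apply: leq_trans h1; lia.
  - by rewrite prednK.
  - exact: leq_pred.
apply: Pr_le.
- apply: measurableI; last first.
    apply: (@mbfun _ _ 'I_n (fun i t => (theta_star lam n + 1 < xi i t))
      (fun u => (#|[set i | u i]%SET| == dg) && (k \notin [set i | u i]%SET))).
      by move=> i; exact: mxlt.
    by move=> t; rewrite /Wtop; congr (_ && _); [congr (_ == _); apply: eq_card => i | congr (~~ _)]; rewrite !inE ?ffunE.
  by apply: measurableI; [exact: m_Eall | apply: m_pre => //; exact: m_lowS].
- exact: m_deg.
move=> t /= [[hA hk] /andP[/eqP hW _]].
by rewrite (deg_low th2 hA hk) hW.
Qed.

Lemma lbC d (T : measurableType d) (R : realType) (P : probability T R)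
  (lam : R) (xi : nat -> T -> R) (n dg : nat) :
  0 < lam -> (forall i, measurable_fun [set: T] (xi i)) ->
  mutually_independent P xi -> (forall i, exponential_rv P lam (xi i)) ->
  goodn lam dg n ->
  kappa lam dg * (1 - expR (- lam)) / 2 <=
  Pr P [set t | kappa lam dg * (1 - expR (- lam)) / 2 < frac_degree xi n (theta_star lam n) dg t].
Proof.
move=> hl hm hI hE hg.
have n0 : (0 < n)%N by case: hg => h1 _ _; apply: leq_trans h1.
set b := kappa lam dg * (1 - expR (- lam)).
have b0 : 0 < b.
  apply: mulr_gt0; first exact: kappa_gt0.
  by rewrite subr_gt0 -[X in _ < X]expR0 ltr_expR oppr_lt0.
have := claim P (theta_star lam n) dg hm n0 (_ : 0 < b / 2).
move=> /(_ ltac:(lra)) hc.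
have hs : n%:R * b <= \sum_(k < n) Pr P [set t | tdegree xi n (theta_star lam n) k t == dg].
  apply: (@le_trans _ _ (\sum_(k < n) b)); first by rewrite sumr_const card_ord mulr_natl.
  by apply: ler_sum => k _; exact: lbB.
have n0r : 0 < (n%:R : R) by rewrite ltr0n.
have := le_trans hs hc.
rewrite -(ler_pM2l n0r).
nra.
Qed.

Unset Implicit Arguments. Set Strict Implicit.

Theorem proposition7 (R : realType) (d : measure_display) (T : measurableType d)
  (P : probability T R) (lam : R) (xi : nat -> T -> R) :
  0 < lam ->
  (forall i, measurable_fun [set: T] (xi i)) ->
  mutually_independent P xi ->
  (forall i, exponential_rv P lam (xi i)) ->
  forall dg : nat, forall c : R,
    ~ cvg_in_prob P
        (fun m => frac_degree xi m.+2 (theta_star lam m.+2) dg) c.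
Proof.
move=> hl hm hI hE dg c H.
set b := kappa lam dg * (1 - expR (- lam)).
have b0 : 0 < b.
  apply: mulr_gt0; first exact: kappa_gt0.
  by rewrite subr_gt0 -[X in _ < X]expR0 ltr_expR oppr_lt0.
have [eps [gam [e0 [g0 hg]]]] : exists eps gam : R, [/\ 0 < eps, 0 < gam &
    forall n, goodn lam dg n ->
      gam <= Pr P [set t | eps < `|frac_degree xi n (theta_star lam n) dg t - c|]].
  have [hc|hc] := lerP (b / 4) `|c|.
    exists (b / 8), (kappa lam dg.+2); split => //; first lra; first exact: kappa_gt0.
    move=> n hn; apply: (le_trans (lbA hl hm hI hE hn)).
    have th0 : 0 <= theta_star lam n.
      by apply: th_ge0 => //; case: hn => h1 _ _; apply: leq_trans h1.
    apply: Pr_le.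
    - apply: measurableI; first exact: m_Eall.
      apply: (@mbfun _ _ 'I_n (fun i t => (theta_star lam n + 1 < xi i t))
        (fun u => #|[set i | u i]%SET| == dg.+2)).
        by move=> i; exact: mxlt.
      by move=> t; rewrite /Wtop; congr (_ == _); apply: eq_card => i; rewrite !inE ffunE.
    - exact: (m_frac n (theta_star lam n) dg (fun x => b / 8 < `|x - c|) hm).
    move=> t /= [hA hW]; rewrite (F2_frac th0 hA hW) sub0r normrN; lra.
  exists (b / 4), (b / 2); split => //; [lra | lra |].
  move=> n hn; apply: (le_trans (lbC hl hm hI hE hn)).
  apply: Pr_le.
  - exact: (m_frac n (theta_star lam n) dg (fun x => b / 2 < x) hm).
  - exact: (m_frac n (theta_star lam n) dg (fun x => b / 4 < `|x - c|) hm).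
  move=> t /= ht; apply: (lt_le_trans _ (ler_norm _)).
  move: ht; rewrite -/b => ht; have := ler_norm c; lra.
have := H eps e0.
rewrite (_ : (fun n => P _) = fun m => (Pr P [set t | eps <
   `|frac_degree xi m.+2 (theta_star lam m.+2) dg t - c|])%:E); last first.
  apply/funext => m; rewrite PrE //.
  exact: (m_frac m.+2 (theta_star lam m.+2) dg (fun x => eps < `|x - c|) hm).
move/fine_cvgP => [_ hc].
have [N1 _ HN1] := cvgr_dist_lt _ _ hc _ g0.
set x := expR (2 * lam) + 2 * expR lam.
pose K := ((Num.Def.trunc x).+1 + (2 * dg.+2 + 2))%N.
pose m := maxn N1 K.
have := HN1 m (leq_maxl _ _).
have hgm : goodn lam dg m.+2.
  have hK : (K <= m.+2)%N by apply: leq_trans (leq_maxr N1 K) _; lia.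
  have hx : x < (m.+2)%:R.
    apply: (lt_le_trans (truncnS_gt x)); rewrite ler_nat.
    by apply: leq_trans hK; rewrite /K leq_addr.
  have e1 := expR_gt0 (2 * lam); have e2 := expR_gt0 lam.
  split.
  - by apply: leq_trans hK; rewrite /K leq_addl.
  - rewrite /x in hx; lra.
  - rewrite /x in hx; lra.
have := hg _ hgm.
rewrite /= sub0r normrN.
move=> h1 h2.
have h3 := ler_norm (Pr P [set t | eps < `|frac_degree xi m.+2 (theta_star lam m.+2) dg t - c|]).
lra.
Qed.
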